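(* Let $N\in\mathbb N$ and, for $p>1$ and $x\in\mathbb R$, let \[\mathfrak h_{p,N}(x)=\sum_{n\in\mathbb Z,\ |x-n|>N}|\mathrm{sinc}(x-n)|^p .\] Then there exists $p_*$ such that $x=1/2$ is a local minimum point of $\mathfrak h_{p,N}$ if $p>p_*$ and a local maximum point of $\mathfrak h_{p,N}$ if $p<p_*$. The value $p_*$ is a solution of the equation \[4(p_*+1)\lambda(p_*+2;N)-\pi^2\lambda(p_*;N)=0,\] and it satisfies \[p_*\ge \frac18\Big(\pi^2(2N+1)^2-12+\sqrt{(\pi^2(2N+1)^2-12)^2-128}\Big),\] \[p_*\le \frac14\sqrt{72\pi^2(N+1)^2\big(2\pi^2(N+1)^2-2-\pi^2\big)+4+36\pi^2+9\pi^4}+3\pi^2(N+1)^2-\frac34(2+\pi^2).\]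
   Context: $\mathrm{sinc}(x)=\frac{\sin(\pi x)}{\pi x}$ for $x\neq0$ and $\mathrm{sinc}(0)=1$. The incomplete Lambda function is $\lambda(s;a)=\sum_{n=1}^\infty \frac{1}{(2(n+a)-1)^s}$ for $s>1$, $a\ge 0$. *)

(* Defs.v *)
From Stdlib Require Import Reals ZArith.
From Coquelicot Require Import Coquelicot.
Open Scope R_scope.

Definition sinc (x : R) : R :=
  if Req_EM_T x 0 then 1 else sin (PI * x) / (PI * x).

(* |y|^p for real exponent p > 0, with the convention 0^p = 0
   (Stdlib's Rpower 0 p is exp(p * ln 0) = 1, so we special-case 0). *)
Definition abs_pow (y p : R) : R :=
  if Req_EM_T y 0 then 0 else Rpower (Rabs y) p.

Definition h_term (p : R) (N : nat) (x : R) (n : Z) : R :=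
  if Rlt_dec (INR N) (Rabs (x - IZR n)) then abs_pow (sinc (x - IZR n)) p else 0.

Definition frak_h (p : R) (N : nat) (x : R) : R :=
  Series (fun k : nat => h_term p N x (Z.of_nat k))
  + Series (fun k : nat => h_term p N x (- Z.of_nat k - 1)%Z).

Definition lambda_inc (s a : R) : R :=
  Series (fun k : nat => / Rpower (2 * (INR (S k) + a) - 1) s).

Definition is_local_min (f : R -> R) (x0 : R) : Prop :=
  exists delta : R, 0 < delta /\ forall x, Rabs (x - x0) < delta -> f x0 <= f x.

Definition is_local_max (f : R -> R) (x0 : R) : Prop :=
  exists delta : R, 0 < delta /\ forall x, Rabs (x - x0) < delta -> f x <= f x0.

(* Main.v *)
Require Import Defs.
From Stdlib Require Import Reals ZArith.
From Coquelicot Require Import Coquelicot.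
From Stdlib Require Import Lra Lia Psatz Classical.
Open Scope R_scope.

Lemma mvt_bnd (f f' : R -> R) (x M : R) :
  (forall c, Rabs c <= Rabs x -> derivable_pt_lim f c (f' c)) ->
  (forall c, Rabs c <= Rabs x -> Rabs (f' c) <= M) ->
  Rabs (f x - f 0) <= M * Rabs x.
Proof.
  intros Hd Hb.
  assert (Hc : forall c, Rmin 0 x <= c <= Rmax 0 x -> Rabs c <= Rabs x).
  { intros c [H1 H2]. unfold Rmin, Rmax in *.
    destruct (Rle_dec 0 x); unfold Rabs; repeat destruct Rcase_abs; lra. }
  destruct (MVT_abs f f' 0 x) as [c [Hc1 Hc2]].
  { intros c Hc'. apply Hd, Hc, Hc'. }
  rewrite Hc1, Rminus_0_r. apply Rmult_le_compat_r. apply Rabs_pos.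
  apply Hb, Hc, Hc2.
Qed.

Lemma ex1 z : Rabs z <= 1 -> Rabs (exp z - 1) <= 3 * Rabs z.
Proof.
  intros Hz.
  replace (exp z - 1) with (exp z - exp 0) by (rewrite exp_0; ring).
  apply (mvt_bnd exp exp).
  - intros c _. apply derivable_pt_lim_exp.
  - intros c Hc. rewrite Rabs_pos_eq by (left; apply exp_pos).
    apply Rle_trans with (exp 1). 2: apply exp_le_3.
    assert (c <= 1) by (apply Rle_trans with (Rabs c); [apply RRle_abs|lra]).
    destruct (Rle_lt_or_eq_dec _ _ H). left; apply exp_increasing; auto. subst; lra.
Qed.

Lemma ex2 z : Rabs z <= 1 -> Rabs (exp z - 1 - z) <= 3 * z^2.
Proof.
  intros Hz.
  replace (exp z - 1 - z) with ((fun t => exp t - 1 - t) z - (fun t => exp t - 1 - t) 0)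
    by (simpl; rewrite exp_0; ring).
  replace (3 * z^2) with ((3 * Rabs z) * Rabs z) by (rewrite <- (pow2_abs z); ring).
  apply (mvt_bnd (fun t => exp t - 1 - t) (fun t => exp t - 1)).
  - intros c _. apply is_derive_Reals. auto_derive; auto; ring.
  - intros c Hc. apply Rle_trans with (3 * Rabs c). apply ex1; lra. lra.
Qed.

Lemma ex3 z : Rabs z <= 1 -> Rabs (exp z - 1 - z - z^2/2) <= 3 * Rabs z ^ 3.
Proof.
  intros Hz.
  replace (exp z - 1 - z - z^2/2) with ((fun t => exp t - 1 - t - t^2/2) z - (fun t => exp t - 1 - t - t^2/2) 0)
    by (simpl; rewrite exp_0; field).
  replace (3 * Rabs z ^3) with ((3 * z^2) * Rabs z) by (rewrite <- (pow2_abs z); ring).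
  apply (mvt_bnd (fun t => exp t - 1 - t - t^2/2) (fun t => exp t - 1 - t)).
  - intros c _. apply is_derive_Reals. auto_derive; auto; field.
  - intros c Hc. apply Rle_trans with (3 * c^2). apply ex2; lra.
    rewrite <- (pow2_abs c), <- (pow2_abs z). apply Rmult_le_compat_l. lra.
    apply pow_incr. split; [apply Rabs_pos|auto].
Qed.

Lemma lg1 w : Rabs w <= /2 -> Rabs (ln (1+w) - w) <= 2 * w^2.
Proof.
  intros Hw.
  assert (Hw' : -/2 <= w <= /2) by (unfold Rabs in Hw; destruct Rcase_abs in Hw; lra).
  replace (ln (1+w) - w) with ((fun t => ln (1+t) - t) w - (fun t => ln (1+t) - t) 0)
    by (simpl; rewrite Rplus_0_r, ln_1; ring).
  replace (2 * w^2) with ((2 * Rabs w) * Rabs w) by (rewrite <- (pow2_abs w); ring).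
  apply (mvt_bnd (fun t => ln (1+t) - t) (fun t => /(1+t) - 1)).
  - intros c Hc. apply is_derive_Reals.
    assert (-/2 <= c <= /2) by (unfold Rabs in *; repeat destruct Rcase_abs; lra).
    auto_derive. lra. field. lra.
  - intros c Hc.
    assert (-/2 <= c <= /2) by (unfold Rabs in *; repeat destruct Rcase_abs; lra).
    replace (/(1+c) - 1) with (-c/(1+c)) by (field; lra).
    unfold Rdiv. rewrite Rabs_mult, Rabs_Ropp, Rabs_inv, (Rabs_pos_eq (1+c)) by lra.
    apply Rle_trans with (Rabs c * 2). apply Rmult_le_compat_l. apply Rabs_pos.
    rewrite <- Rinv_inv with 2. apply Rinv_le_contravar; lra.
    lra.
Qed.

Lemma lg2 w : Rabs w <= /2 -> Rabs (ln (1+w) - w + w^2/2) <= 2 * Rabs w ^ 3.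
Proof.
  intros Hw.
  assert (Hw' : -/2 <= w <= /2) by (unfold Rabs in Hw; destruct Rcase_abs in Hw; lra).
  replace (ln (1+w) - w + w^2/2) with ((fun t => ln (1+t) - t + t^2/2) w - (fun t => ln (1+t) - t + t^2/2) 0)
    by (simpl; rewrite Rplus_0_r, ln_1; field).
  replace (2 * Rabs w ^ 3) with ((2 * w^2) * Rabs w) by (rewrite <- (pow2_abs w); ring).
  apply (mvt_bnd (fun t => ln (1+t) - t + t^2/2) (fun t => /(1+t) - 1 + t)).
  - intros c Hc. apply is_derive_Reals.
    assert (-/2 <= c <= /2) by (unfold Rabs in *; repeat destruct Rcase_abs; lra).
    auto_derive. lra. field. lra.
  - intros c Hc.
    assert (-/2 <= c <= /2) by (unfold Rabs in *; repeat destruct Rcase_abs; lra).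
    replace (/(1+c) - 1 + c) with (c^2/(1+c)) by (field; lra).
    unfold Rdiv. rewrite Rabs_mult, Rabs_inv, (Rabs_pos_eq (1+c)) by lra.
    rewrite Rabs_pos_eq by nra.
    apply Rle_trans with (c^2 * 2). apply Rmult_le_compat_l. nra.
    rewrite <- Rinv_inv with 2. apply Rinv_le_contravar; lra.
    rewrite <- (pow2_abs c), <- (pow2_abs w).
    assert (Rabs c ^2 <= Rabs w ^2) by (apply pow_incr; split; [apply Rabs_pos|auto]). lra.
Qed.


Lemma cos_bnds y : Rabs y <= 1 -> 1 - y^2/2 <= cos y <= 1 - y^2/2 + y^4/24.
Proof.
  intros Hy.
  assert (-2 <= y <= 2) by (unfold Rabs in Hy; destruct Rcase_abs in Hy; lra).
  destruct (pre_cos_bound y 0) as [H1 H2]; try lra.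
  unfold cos_approx, cos_term in H1, H2. simpl in H1, H2.
  split; [ lra | lra ].
Qed.

Lemma lcos y : Rabs y <= /2 -> Rabs (ln (cos y) + y^2/2) <= y^4.
Proof.
  intros Hy.
  destruct (cos_bnds y) as [H1 H2]. lra.
  assert (Hy2 : y^2 <= /4). { rewrite <- (pow2_abs y). assert (0 <= Rabs y) by apply Rabs_pos. nra. }
  set (w := cos y - 1).
  assert (Hw : Rabs w <= y^2/2). { unfold w. unfold Rabs; destruct Rcase_abs; nra. }
  assert (Hw2 : Rabs w <= /2) by lra.
  pose proof (lg1 w Hw2) as Hl.
  replace (1 + w) with (cos y) in Hl by (unfold w; ring).
  replace (ln (cos y) + y^2/2) with ((ln (cos y) - w) + (w + y^2/2)) by ring.
  eapply Rle_trans. apply Rabs_triang.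
  assert (Rabs (w + y^2/2) <= y^4/24). { unfold w. unfold Rabs; destruct Rcase_abs; nra. }
  assert (w^2 <= (y^2/2)^2). { rewrite <- (pow2_abs w). assert (0 <= Rabs w) by apply Rabs_pos. nra. }
  nra.
Qed.

Definition Ck (p : R) := 100 * p + 100 * p^2 + 400 * p^3.

Lemma rabs_le_2 a b : -b <= a <= b -> Rabs a <= b.
Proof. intros; unfold Rabs; destruct Rcase_abs; lra. Qed.
Lemma rabs_2 a b : Rabs a <= b -> -b <= a <= b.
Proof. intros; unfold Rabs in *; destruct Rcase_abs; lra. Qed.

Lemma rabs5 a b c d e : Rabs (a+b+c+d+e) <= Rabs a + Rabs b + Rabs c + Rabs d + Rabs e.
Proof.
  pose proof (Rabs_triang (a+b+c+d) e). pose proof (Rabs_triang (a+b+c) d).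
  pose proof (Rabs_triang (a+b) c). pose proof (Rabs_triang a b). lra.
Qed.

Lemma alg (p σ u y e1 e2p e2m e3p e3m : R) :
  0 < p -> 0 <= σ <= /8 -> Rabs u <= 2*σ -> y^2 <= 16*σ^2 ->
  Rabs e1 <= 32*σ^3 -> Rabs e2p <= 16*σ^3 -> Rabs e2m <= 16*σ^3 ->
  Rabs e3p <= 192*p^3*σ^3 -> Rabs e3m <= 192*p^3*σ^3 ->
  Rabs (p*(2*e1 - e2p - e2m) + p*u*(p*(u^2/2 - y^2/2 + e1 - e2m) - p*(u^2/2 - y^2/2 + e1 - e2p))
        + ((p*(u^2/2 - y^2/2 + e1 - e2p))^2 + (p*(u^2/2 - y^2/2 + e1 - e2m))^2)/2 + e3p + e3m)
    <= Ck p * σ^3.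
Proof.
  intros Hp Hs Hu Hy H1 H2 H3 H4 H5.
  assert (Hu2 : u^2 <= 4*σ^2). { rewrite <- (pow2_abs u). assert (0 <= Rabs u) by apply Rabs_pos. nra. }
  assert (Hs3 : σ^3 <= σ^2/8) by nra.
  assert (0 <= y^2) by nra. assert (0 <= u^2) by nra.
  set (ap := u^2/2 - y^2/2 + e1 - e2p).
  set (am := u^2/2 - y^2/2 + e1 - e2m).
  assert (Hap : Rabs ap <= 16*σ^2).
  { apply rabs_le_2. apply rabs_2 in H1. apply rabs_2 in H2. unfold ap. idtac. lra. }
  assert (Ham : Rabs am <= 16*σ^2).
  { apply rabs_le_2. apply rabs_2 in H1. apply rabs_2 in H3. unfold am. lra. }
  clearbody ap am.
  assert (T1 : Rabs (p*(2*e1 - e2p - e2m)) <= 96*p*σ^3).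
  { rewrite Rabs_mult, Rabs_pos_eq by lra.
    replace (96*p*σ^3) with (p*(96*σ^3)) by ring. apply Rmult_le_compat_l. lra.
    apply rabs_le_2. apply rabs_2 in H1. apply rabs_2 in H2. apply rabs_2 in H3. lra. }
  assert (T2 : Rabs (p*u*(p*am - p*ap)) <= 64*p^2*σ^3).
  { rewrite !Rabs_mult, Rabs_pos_eq by lra.
    replace (p*am - p*ap) with (p*(am-ap)) by ring. rewrite Rabs_mult, (Rabs_pos_eq p) by lra.
    assert (Rabs (am - ap) <= 32*σ^2).
    { eapply Rle_trans. apply Rabs_triang. rewrite Rabs_Ropp. lra. }
    assert (0 <= Rabs u) by apply Rabs_pos. assert (0 <= Rabs (am-ap)) by apply Rabs_pos.
    replace (64*p^2*σ^3) with ((p*(2*σ))*(p*(32*σ^2))) by ring.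
    apply Rmult_le_compat; try nra; apply Rmult_le_compat_l; lra. }
  assert (T3 : Rabs (((p*ap)^2 + (p*am)^2)/2) <= 32*p^2*σ^3).
  { rewrite Rabs_pos_eq by nra.
    assert (ap^2 <= 256*σ^4). { rewrite <- (pow2_abs ap). assert (0 <= Rabs ap) by apply Rabs_pos. nra. }
    assert (am^2 <= 256*σ^4). { rewrite <- (pow2_abs am). assert (0 <= Rabs am) by apply Rabs_pos. nra. }
    assert (σ^4 <= σ^3/8) by nra.
    replace (((p*ap)^2 + (p*am)^2)/2) with (p^2*((ap^2+am^2)/2)) by field.
    replace (32*p^2*σ^3) with (p^2*(32*σ^3)) by ring.
    apply Rmult_le_compat_l. nra. nra. }
  unfold Ck.
  eapply Rle_trans. apply rabs5.
  assert (0 <= p*σ^3) by (apply Rmult_le_pos; [lra|apply pow_le; lra]).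
  assert (0 <= p^2*σ^3) by (apply Rmult_le_pos; [nra|apply pow_le; lra]).
  assert (0 <= p^3*σ^3) by (apply Rmult_le_pos; [apply pow_le; lra|apply pow_le; lra]).
  replace ((100 * p + 100 * p ^ 2 + 400 * p ^ 3) * σ ^ 3) with (100*(p*σ^3) + 100*(p^2*σ^3) + 400*(p^3*σ^3)) by ring.
  replace (96*p*σ^3) with (96*(p*σ^3)) in T1 by ring.
  replace (64*p^2*σ^3) with (64*(p^2*σ^3)) in T2 by ring.
  replace (32*p^2*σ^3) with (32*(p^2*σ^3)) in T3 by ring.
  replace (192*p^3*σ^3) with (192*(p^3*σ^3)) in H4, H5 by ring.
  lra.
Qed.

Lemma key p s u : 1 < p -> Rabs s <= /8 -> p * Rabs s <= /4 -> Rabs u <= 2*Rabs s ->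
  Rabs (exp (p*(ln (cos (PI*s)) - ln (1+u))) + exp (p*(ln (cos (PI*s)) - ln (1-u)))
        - 2 - p*(p+1)*u^2 + p*(PI*s)^2) <= Ck p * Rabs s ^ 3.
Proof.
  intros Hp Hs Hps Hu.
  set (σ := Rabs s) in *.
  assert (Hσ : 0 <= σ) by apply Rabs_pos.
  assert (Hpi := PI_4). assert (Hpi3 := PI2_3_2).
  assert (Hy : Rabs (PI*s) <= 4*σ).
  { rewrite Rabs_mult, Rabs_pos_eq by lra. unfold σ. apply Rmult_le_compat_r. apply Rabs_pos. lra. }
  assert (Hy2 : (PI*s)^2 <= 16*σ^2).
  { rewrite <- (pow2_abs (PI*s)). assert (0 <= Rabs (PI*s)) by apply Rabs_pos. nra. }
  assert (Hs3 : σ^3 <= σ^2/8) by nra.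
  assert (E1 : Rabs (ln (cos (PI*s)) + (PI*s)^2/2) <= 32*σ^3).
  { eapply Rle_trans. apply lcos. lra.
    assert (0 <= (PI*s)^2) by nra. assert ((PI*s)^4 = ((PI*s)^2)^2) by ring. nra. }
  assert (Hu2 : Rabs u <= /2) by lra.
  assert (Hu3 : Rabs u ^3 <= 8 * σ^3).
  { replace (8*σ^3) with ((2*σ)^3) by ring. apply pow_incr. split; [apply Rabs_pos|auto]. }
  assert (E2p : Rabs (ln (1+u) - u + u^2/2) <= 16*σ^3).
  { eapply Rle_trans. apply lg2; auto. lra. }
  assert (E2m : Rabs (ln (1-u) + u + u^2/2) <= 16*σ^3).
  { replace (ln (1-u) + u + u^2/2) with (ln (1+ -u) - (-u) + (-u)^2/2) by (unfold Rminus; field).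
    eapply Rle_trans. apply lg2. rewrite Rabs_Ropp; auto. rewrite Rabs_Ropp. lra. }
  assert (HZ : forall L1 L2, Rabs (L1 + (PI*s)^2/2) <= 32*σ^3 ->
             (Rabs (L2 - u + u^2/2) <= 16*σ^3 \/ Rabs (L2 + u + u^2/2) <= 16*σ^3) ->
             Rabs (exp (p*(L1 - L2)) - 1 - p*(L1-L2) - (p*(L1-L2))^2/2) <= 192*p^3*σ^3).
  { intros L1 L2 H1 H2.
    assert (Rabs (p*(L1-L2)) <= 4*p*σ).
    { rewrite Rabs_mult, Rabs_pos_eq by lra. replace (4*p*σ) with (p*(4*σ)) by ring.
      apply Rmult_le_compat_l. lra.
      assert (u^2 <= 4*σ^2). { rewrite <- (pow2_abs u). assert (0 <= Rabs u) by apply Rabs_pos. nra. }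
      apply rabs_le_2. apply rabs_2 in H1. pose proof (rabs_2 _ _ Hu).
      assert (0 <= u^2) by nra. assert (0 <= (PI*s)^2) by nra.
      assert (σ^2 <= σ/8) by nra. destruct H2 as [H2|H2]; apply rabs_2 in H2; lra. }
    eapply Rle_trans. apply ex3. lra.
    replace (192*p^3*σ^3) with (3*(4*p*σ)^3) by ring.
    apply Rmult_le_compat_l. lra. apply pow_incr. split; [apply Rabs_pos|auto]. }
  pose proof (HZ _ _ E1 (or_introl E2p)) as E3p.
  pose proof (HZ _ _ E1 (or_intror E2m)) as E3m.
  pose proof (alg p σ u (PI*s) _ _ _ _ _ ltac:(lra) ltac:(lra) Hu Hy2 E1 E2p E2m E3p E3m) as HA.
  match type of HA with Rabs ?X <= _ => replace (exp (p * (ln (cos (PI * s)) - ln (1 + u))) +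
   exp (p * (ln (cos (PI * s)) - ln (1 - u))) - 2 - p * (p + 1) * u ^ 2 + p * (PI * s) ^ 2) with X by field end.
  exact HA.
Qed.


Lemma sin_odd m x : Rabs (sin (x + (2*INR m+1)*PI/2)) = Rabs (cos x).
Proof.
  induction m.
  - simpl. replace (x + (2*0+1)*PI/2) with (x + PI/2) by field.
    rewrite sin_plus, sin_PI2, cos_PI2. f_equal; ring.
  - rewrite S_INR. replace (x + (2*(INR m + 1)+1)*PI/2) with ((x + (2*INR m+1)*PI/2) + PI) by field.
    rewrite neg_sin, Rabs_Ropp. exact IHm.
Qed.

Lemma sinc_even t : sinc (-t) = sinc t.
Proof.
  unfold sinc. destruct (Req_EM_T (-t) 0); destruct (Req_EM_T t 0); try lra.
  replace (PI * - t) with (- (PI*t)) by ring. rewrite sin_neg. field.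
  split; auto. pose proof PI_RGT_0; lra.
Qed.

Lemma absR p s m : Rabs s <= /8 ->
  abs_pow (sinc (s + (2*INR m+1)/2)) p = Rpower (cos (PI*s) / (PI*((2*INR m+1)/2 + s))) p.
Proof.
  intros Hs. pose proof (pos_INR m). pose proof PI_RGT_0. pose proof PI2_3_2.
  assert (Hs' : -/8 <= s <= /8) by (apply rabs_2; auto).
  assert (Hc : 0 < cos (PI*s)).
  { apply cos_gt_0; nra. }
  assert (Hd : 0 < (2*INR m+1)/2 + s) by lra.
  assert (Hsc : sinc (s + (2*INR m+1)/2) = sin (PI*s + (2*INR m+1)*PI/2) / (PI*((2*INR m+1)/2 + s))).
  { unfold sinc. destruct Req_EM_T. lra. f_equal. f_equal. field. ring. }
  assert (Habs : Rabs (sinc (s + (2*INR m+1)/2)) = cos (PI*s) / (PI*((2*INR m+1)/2 + s))).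
  { rewrite Hsc. set (SS := sin _). assert (Rabs SS = cos (PI*s)) by (unfold SS; rewrite sin_odd; apply Rabs_pos_eq; lra).
    clearbody SS. unfold Rdiv. rewrite Rabs_mult, H2, Rabs_inv, (Rabs_pos_eq (PI*_)); try lra; nra. }
  unfold abs_pow. destruct Req_EM_T.
  - exfalso. rewrite e, Rabs_R0 in Habs. 
    assert (0 < cos (PI*s) / (PI*((2*INR m+1)/2 + s))) by (apply Rdiv_lt_0_compat; nra). lra.
  - rewrite Habs. auto.
Qed.

Definition Tm p b s := abs_pow (sinc (s + b/2)) p + abs_pow (sinc (s - b/2)) p.

Lemma rp_split p c q w : 0 < c -> 0 < q -> 0 < w ->
  Rpower (c/(PI*(q*w))) p = Rpower PI (-p) * Rpower q (-p) * exp (p*(ln c - ln w)).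
Proof.
  intros. pose proof PI_RGT_0. unfold Rpower. rewrite <- !exp_plus. f_equal.
  rewrite ln_div. 2: lra. 2: { apply Rmult_lt_0_compat. lra. apply Rmult_lt_0_compat; lra. }
  rewrite !ln_mult; try lra. apply Rmult_lt_0_compat; lra.
Qed.

Lemma Tm_formula p m s : Rabs s <= /8 ->
  Tm p (2*INR m+1) s = Rpower PI (-p) * Rpower ((2*INR m+1)/2) (-p) *
     (exp (p*(ln (cos (PI*s)) - ln (1+2*s/(2*INR m+1)))) + exp (p*(ln (cos (PI*s)) - ln (1-2*s/(2*INR m+1))))).
Proof.
  intros Hs. pose proof (pos_INR m). pose proof PI_RGT_0. pose proof PI2_3_2.
  assert (Hs' : -/8 <= s <= /8) by (apply rabs_2; auto).
  assert (Hc : 0 < cos (PI*s)) by (apply cos_gt_0; nra).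
  unfold Tm. rewrite absR by auto.
  replace (s - (2*INR m+1)/2) with (-(-s + (2*INR m+1)/2)) by ring. rewrite sinc_even.
  rewrite absR by (rewrite Rabs_Ropp; auto).
  replace (PI * - s) with (-(PI*s)) by ring. rewrite cos_neg.
  set (b := 2*INR m+1).
  assert (Hb : 1 <= b) by (unfold b; lra).
  assert (Hu : Rabs (2*s/b) <= /4).
  { unfold Rdiv. rewrite !Rabs_mult, Rabs_inv, (Rabs_pos_eq 2), (Rabs_pos_eq b) by lra.
    apply Rle_trans with (2 * Rabs s * 1). apply Rmult_le_compat_l. pose proof (Rabs_pos s); lra. rewrite <- Rinv_1. apply Rinv_le_contravar; lra. lra. }
  apply rabs_2 in Hu.
  replace (b/2 + s) with ((b/2)*(1+2*s/b)) by (field; lra).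
  replace (b/2 + -s) with ((b/2)*(1-2*s/b)) by (field; lra).
  rewrite !rp_split by lra. ring.
Qed.

Lemma Rpower_half b p : 0 < b -> Rpower (b/2) (-p) = Rpower 2 p * Rpower b (-p).
Proof.
  intros. unfold Rpower. rewrite <- exp_plus. f_equal. rewrite ln_div; lra.
Qed.

Lemma Rpower_p2 b p : 0 < b -> Rpower b (-(p+2)) = Rpower b (-p) / b^2.
Proof.
  intros. replace (-(p+2)) with (-p + -(INR 2)) by (simpl; ring).
  rewrite Rpower_plus, (Rpower_Ropp b (INR 2)), Rpower_pow by auto. reflexivity.
Qed.

Lemma Rpower_pos x y : 0 < Rpower x y.
Proof. unfold Rpower. apply exp_pos. Qed.

Lemma Tm_est p m s : 1 < p -> Rabs s <= /8 -> p * Rabs s <= /4 ->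
  Rabs (Tm p (2*INR m+1) s - Tm p (2*INR m+1) 0
        - Rpower PI (-p) * Rpower 2 p * p * s^2 *
          (4*(p+1)*Rpower (2*INR m+1) (-(p+2)) - PI^2 * Rpower (2*INR m+1) (-p)))
  <= Rpower PI (-p) * Rpower 2 p * Rpower (2*INR m+1) (-p) * (Ck p * Rabs s ^ 3).
Proof.
  intros Hp Hs Hps.
  rewrite !Tm_formula by (try rewrite Rabs_R0; lra).
  pose proof (pos_INR m).
  set (b := 2*INR m+1). assert (Hb : 1 <= b) by (unfold b; lra).
  replace (PI*0) with 0 by ring. rewrite cos_0, ln_1.
  replace (2*0/b) with 0 by (field; lra). rewrite Rplus_0_r, Rminus_0_r, ln_1.
  replace (p*(0-0)) with 0 by ring. rewrite exp_0.
  rewrite Rpower_half, Rpower_p2 by lra.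
  set (K := Rpower PI (-p) * (Rpower 2 p * Rpower b (-p))).
  assert (HK : 0 < K) by (unfold K; repeat apply Rmult_lt_0_compat; apply Rpower_pos).
  match goal with |- Rabs (K * ?F - K * (1+1) - _) <= _ =>
    replace (K * F - K * 2 - _) with (K * (F - 2 - p*(p+1)*(2*s/b)^2 + p*(PI*s)^2)) by (unfold K; field; lra) end.
  rewrite Rabs_mult, (Rabs_pos_eq K) by lra.
  replace (Rpower PI (-p) * Rpower 2 p * Rpower b (-p) * (Ck p * Rabs s ^ 3)) with (K * (Ck p * Rabs s^3)) by (unfold K; ring).
  apply Rmult_le_compat_l. lra.
  apply key; auto.
  unfold Rdiv. rewrite !Rabs_mult, Rabs_inv, (Rabs_pos_eq 2), (Rabs_pos_eq b) by lra.
  pose proof (Rabs_pos s).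
  assert (/b <= 1) by (rewrite <- Rinv_1; apply Rinv_le_contravar; lra).
  assert (0 < /b) by (apply Rinv_0_lt_compat; lra). nra.
Qed.


Lemma ser_lim (a : nat -> R) l : is_series a l <-> is_lim_seq (sum_n a) l.
Proof. split; intros H; exact H. Qed.

Lemma ser_le (a b : nat -> R) (la lb : R) : is_series a la -> is_series b lb -> (forall n, a n <= b n) -> la <= lb.
Proof.
  intros Ha Hb H. pose proof (proj1 (ser_lim a la) Ha) as Ha'. pose proof (proj1 (ser_lim b lb) Hb) as Hb'.
  assert (Rbar_le la lb). { refine (is_lim_seq_le _ _ _ _ _ Ha' Hb'). intros n. apply (sum_n_m_le a b O n H). }
  exact H0.
Qed.

Lemma ser_opp (a : nat -> R) (l : R) : is_series a l -> is_series (fun n => - a n) (- l).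
Proof. intros H. apply (is_series_opp a l H). Qed.

Lemma ser_plus (a b : nat -> R) (la lb : R) : is_series a la -> is_series b lb -> is_series (fun n => a n + b n) (la + lb).
Proof. intros H1 H2. apply (is_series_plus a b la lb H1 H2). Qed.

Lemma ser_minus (a b : nat -> R) (la lb : R) : is_series a la -> is_series b lb -> is_series (fun n => a n - b n) (la - lb).
Proof. intros H1 H2. apply (is_series_minus a b la lb H1 H2). Qed.

Lemma ser_scal (c : R) (a : nat -> R) (l : R) : is_series a l -> is_series (fun n => c * a n) (c * l).
Proof. intros H. apply (is_series_scal c a l H). Qed.

Lemma ser_ext (a b : nat -> R) (l : R) : (forall n, a n = b n) -> is_series a l -> is_series b l.
Proof. intros H1 H2. apply (is_series_ext a b l H1 H2). Qed.

Lemma ser_abs_le (a c : nat -> R) (la lc : R) : is_series a la -> is_series c lc ->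
  (forall n, Rabs (a n) <= c n) -> Rabs la <= lc.
Proof.
  intros Ha Hc H. apply rabs_le_2. split.
  - pose proof (ser_opp _ _ Hc). apply (ser_le _ _ _ _ H0 Ha). intros n. pose proof (rabs_2 _ _ (H n)). lra.
  - apply (ser_le _ _ _ _ Ha Hc). intros n. pose proof (rabs_2 _ _ (H n)). lra.
Qed.

Lemma ser_unique (a : nat -> R) (l1 l2 : R) : is_series a l1 -> is_series a l2 -> l1 = l2.
Proof. intros H1 H2. apply is_series_unique in H1. apply is_series_unique in H2. congruence. Qed.

Lemma ser_bound (a : nat -> R) M : (forall n, 0 <= a n) -> (forall n, sum_n a n <= M) ->
  exists l : R, is_series a l /\ l <= M.
Proof.
  intros H0 HM.
  assert (Hinc : forall n, sum_n a n <= sum_n a (S n)).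
  { intros n. rewrite sum_Sn. change (plus (sum_n a n) (a (S n))) with (sum_n a n + a (S n)). specialize (H0 (S n)). lra. }
  destruct (ex_finite_lim_seq_incr _ M Hinc HM) as [l Hl].
  exists l. split. apply ser_lim; auto.
  assert (Rbar_le l M). { refine (is_lim_seq_le _ (fun _ => M) _ _ HM Hl _). apply is_lim_seq_const. }
  exact H.
Qed.

Lemma ser_ge_partial (a : nat -> R) (l : R) n : (forall n, 0 <= a n) -> is_series a l -> sum_n a n <= l.
Proof.
  intros H0 Hl. apply (is_lim_seq_incr_compare (sum_n a) l). apply ser_lim; auto.
  intros k. rewrite sum_Sn. change (plus (sum_n a k) (a (S k))) with (sum_n a k + a (S k)). specialize (H0 (S k)). lra.
Qed.

Lemma ser_cmp (a b : nat -> R) (lb : R) : (forall n, 0 <= a n <= b n) -> is_series b lb -> exists la : R, is_series a la.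
Proof.
  intros H Hb. assert (ex_series a).
  { apply (ex_series_le a b). intros n. change (norm (a n)) with (Rabs (a n)). rewrite Rabs_pos_eq; apply H.
    exists lb; auto. }
  destruct H0 as [l Hl]. exists l; auto.
Qed.

Lemma ser_shift0 (n : nat) : forall (a : nat -> R) (l : R), (forall k, (k < n)%nat -> a k = 0) ->
  is_series (fun k => a (n+k)%nat) l -> is_series a l.
Proof.
  induction n; intros a l Hz H.
  - apply (ser_ext (fun k => a (0+k)%nat)); auto.
  - apply (is_series_decr_1 a l).
    rewrite Hz by lia. change (opp 0) with (- 0). rewrite Ropp_0. change (plus l 0) with (l + 0). rewrite Rplus_0_r.
    apply (IHn (fun k => a (S k))). intros k Hk. apply Hz. lia.
    apply (ser_ext (fun k => a (S n + k)%nat)); auto.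
Qed.


Lemma ln_ge y : 0 < y -> 1 - /y <= ln y.
Proof.
  intros. pose proof (exp_ineq1_le (ln (/y))). rewrite exp_ln in H0 by (apply Rinv_0_lt_compat; lra).
  rewrite ln_Rinv in H0 by lra. lra.
Qed.

Lemma tele q x : 1 < q -> 1 <= x ->
  Rpower (x+2) (-q) + Rpower (x+2) (1-q)/(2*(q-1)) <= Rpower x (1-q)/(2*(q-1)).
Proof.
  intros Hq Hx. unfold Rpower.
  set (r := q - 1).
  replace (1 - q) with (-r) by (unfold r; ring). replace (-q) with (-r + -1) by (unfold r; ring).
  rewrite Rmult_plus_distr_r, exp_plus.
  replace (-1 * ln (x+2)) with (ln (/(x+2))) by (rewrite ln_Rinv by lra; ring). rewrite exp_ln by (apply Rinv_0_lt_compat; lra).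
  replace (- r * ln x) with (- r * ln (x+2) + r * (ln (x+2) - ln x)) by ring. rewrite exp_plus.
  set (E := exp (-r * ln (x+2))). assert (0 < E) by apply exp_pos.
  assert (Hl : 2/(x+2) <= ln (x+2) - ln x).
  { rewrite <- ln_div by lra. eapply Rle_trans. 2: apply ln_ge. right. field. lra.
    apply Rdiv_lt_0_compat; lra. }
  pose proof (exp_ineq1_le (r * (ln (x+2) - ln x))).
  assert (0 < r) by (unfold r; lra).
  assert (r * (2/(x+2)) <= r * (ln (x+2) - ln x)) by (apply Rmult_le_compat_l; lra).
  apply Rmult_le_reg_r with (2*r). lra.
  replace ((E * / (x + 2) + E / (2 * r)) * (2 * r)) with (E * (1 + r*(2/(x+2)))) by (field; lra).
  replace (E * exp (r * (ln (x + 2) - ln x)) / (2 * r) * (2 * r)) with (E * exp (r * (ln (x + 2) - ln x))) by (field; lra).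
  apply Rmult_le_compat_l; lra.
Qed.

Definition bb (N j : nat) := 2 * INR (N + j) + 1.

Lemma bb_ge N j : 1 <= bb N j.
Proof. unfold bb. pose proof (pos_INR (N+j)). lra. Qed.

Lemma bb_S N j : bb N (S j) = bb N j + 2.
Proof. unfold bb. rewrite <- plus_n_Sm, S_INR. ring. Qed.

Lemma bb_0 N : bb N 0 = 2 * INR N + 1.
Proof. unfold bb. rewrite Nat.add_0_r. auto. Qed.

Lemma lam_summand N q k : / Rpower (2 * (INR (S k) + INR N) - 1) q = Rpower (bb N k) (-q).
Proof.
  rewrite Rpower_Ropp. f_equal. f_equal. unfold bb. rewrite S_INR, plus_INR. ring.
Qed.

Lemma Rpower_le1 x q : 1 <= x -> 0 <= q -> Rpower x (-q) <= 1.
Proof.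
  intros. unfold Rpower. rewrite <- exp_0. assert (0 <= ln x). { rewrite <- ln_1. apply ln_le; lra. }
  assert (-q * ln x <= 0) by nra. destruct (Rle_lt_or_eq_dec _ _ H2).
  left. apply exp_increasing; auto. rewrite e. right; auto.
Qed.

Lemma lam_series N q : 1 < q ->
  is_series (fun j => Rpower (bb N j) (-q)) (lambda_inc q (INR N)) /\
  lambda_inc q (INR N) <= Rpower (bb N 0) (-q) + Rpower (bb N 0) (1-q)/(2*(q-1)).
Proof.
  intros Hq.
  set (a := fun j => Rpower (bb N j) (-q)).
  assert (Hp : forall n, sum_n a n + Rpower (bb N n) (1-q)/(2*(q-1)) <= Rpower (bb N 0) (-q) + Rpower (bb N 0) (1-q)/(2*(q-1))).
  { induction n. rewrite sum_O. unfold a. lra.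
    rewrite sum_Sn. change (plus (sum_n a n) (a (S n))) with (sum_n a n + a (S n)).
    pose proof (tele q (bb N n) Hq (bb_ge N n)). unfold a. rewrite bb_S. unfold a in IHn. lra. }
  assert (Hpos : forall n, 0 <= a n) by (intros; left; apply Rpower_pos).
  assert (Hq2 : forall n, 0 <= Rpower (bb N n) (1-q)/(2*(q-1))).
  { intros. apply Rdiv_le_0_compat. left; apply Rpower_pos. lra. }
  destruct (ser_bound a (Rpower (bb N 0) (-q) + Rpower (bb N 0) (1-q)/(2*(q-1))) Hpos) as [l [Hl Hle]].
  { intros n. specialize (Hp n). specialize (Hq2 n). lra. }
  assert (lambda_inc q (INR N) = l).
  { unfold lambda_inc. apply is_series_unique. apply (ser_ext a); auto. intros k. unfold a. rewrite lam_summand. auto. }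
  rewrite H. split; auto.
Qed.

Lemma lam_pos N q : 1 < q -> 0 < lambda_inc q (INR N).
Proof.
  intros Hq. destruct (lam_series N q Hq) as [H _].
  pose proof (ser_ge_partial _ _ O (fun n => Rlt_le _ _ (Rpower_pos _ _)) H). rewrite sum_O in H0.
  pose proof (Rpower_pos (bb N 0) (-q)). lra.
Qed.

Lemma lam_ge_first N q : 1 < q -> Rpower (bb N 0) (-q) <= lambda_inc q (INR N).
Proof.
  intros Hq. destruct (lam_series N q Hq) as [H _].
  pose proof (ser_ge_partial _ _ O (fun n => Rlt_le _ _ (Rpower_pos _ _)) H). rewrite sum_O in H0. auto.
Qed.


Lemma absR_bound p s m : 0 < p -> Rabs s <= /8 ->
  abs_pow (sinc (s + (2*INR m+1)/2)) p <= Rpower (4/PI) p * Rpower (2*INR m+1) (-p).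
Proof.
  intros Hp Hs. rewrite absR by auto.
  pose proof (pos_INR m). pose proof PI_RGT_0. pose proof PI2_3_2.
  assert (Hs' : -/8 <= s <= /8) by (apply rabs_2; auto).
  assert (Hc : 0 < cos (PI*s)) by (apply cos_gt_0; nra).
  pose proof (COS_bound (PI*s)).
  assert (Rpower (4/PI) p * Rpower (2*INR m+1) (-p) = Rpower (4/(PI*(2*INR m+1))) p).
  { unfold Rpower. rewrite <- exp_plus. f_equal. rewrite !ln_div, ln_mult; try nra; try ring. }
  rewrite H3. apply Rle_Rpower_l. lra. split.
  apply Rdiv_lt_0_compat; nra.
  unfold Rdiv. apply Rle_trans with (1 * / (PI * ((2 * INR m + 1) / 2 + s))).
  apply Rmult_le_compat_r. left; apply Rinv_0_lt_compat; nra. lra.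
  rewrite Rmult_1_l. apply Rle_trans with (/ (PI * ((2 * INR m + 1)/4))).
  apply Rinv_le_contravar. nra. apply Rmult_le_compat_l; lra.
  right. field. lra.
Qed.

Lemma h_term_eval p N x n t : x - IZR n = t -> INR N < Rabs t -> h_term p N x n = abs_pow (sinc t) p.
Proof.
  intros H1 H2. unfold h_term. rewrite H1. destruct Rlt_dec; auto. contradiction.
Qed.

Lemma h_term_zero p N x n : Rabs (x - IZR n) <= INR N -> h_term p N x n = 0.
Proof.
  intros H. unfold h_term. destruct Rlt_dec; auto. lra.
Qed.

Lemma IZR_nat k : IZR (Z.of_nat k) = INR k.
Proof. rewrite INR_IZR_INZ. auto. Qed.

Lemma IZR_neg k : IZR (- Z.of_nat k - 1) = - INR k - 1.
Proof. rewrite minus_IZR, opp_IZR, IZR_nat. auto. Qed.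

Lemma frak_series p N x : 1 < p -> Rabs (x - 1/2) <= /8 ->
  is_series (fun j => Tm p (bb N j) (x - 1/2)) (frak_h p N x).
Proof.
  intros Hp Hs. set (s := x - 1/2) in *.
  assert (Hs' : -/8 <= s <= /8) by (apply rabs_2; auto).
  set (Lj := fun j => abs_pow (sinc (s - bb N j/2)) p).
  set (Rj := fun j => abs_pow (sinc (s + bb N j/2)) p).
  assert (Hmaj := proj1 (lam_series N p Hp)).
  pose proof (ser_scal (Rpower (4/PI) p) _ _ Hmaj) as Hmaj'.
  assert (Hnn : forall y, 0 <= abs_pow y p).
  { intros. unfold abs_pow. destruct Req_EM_T. lra. left; apply Rpower_pos. }
  assert (BL : forall n, 0 <= Lj n <= Rpower (4 / PI) p * Rpower (bb N n) (- p)).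
  { intros n; split; [apply Hnn|].
    unfold Lj, bb. replace (s - (2*INR (N+n)+1)/2) with (-(-s + (2*INR (N+n)+1)/2)) by field.
    rewrite sinc_even. apply absR_bound. lra. rewrite Rabs_Ropp; auto. }
  assert (BR : forall n, 0 <= Rj n <= Rpower (4 / PI) p * Rpower (bb N n) (- p)).
  { intros n; split; [apply Hnn|]. unfold Rj, bb. apply absR_bound. lra. auto. }
  destruct (ser_cmp Lj _ _ BL Hmaj') as [lL HL].
  destruct (ser_cmp Rj _ _ BR Hmaj') as [lR HR].
  assert (HT : is_series (fun j => Tm p (bb N j) s) (lR + lL)).
  { apply (ser_ext (fun j => Rj j + Lj j)). intros; unfold Tm, Rj, Lj; auto. apply ser_plus; auto. }
  set (u := fun k : nat => h_term p N x (Z.of_nat k)).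
  set (v := fun k : nat => h_term p N x (- Z.of_nat k - 1)).
  assert (HuL : forall j, u (N + 1 + j)%nat = Lj j).
  { intros j. unfold u, Lj. apply h_term_eval. rewrite IZR_nat. unfold s, bb. rewrite !plus_INR. simpl. field.
    unfold bb. rewrite Rabs_left1. rewrite plus_INR. pose proof (pos_INR j). lra.
    pose proof (pos_INR (N+j)). lra. }
  assert (Hfr : frak_h p N x = Series u + Series v) by reflexivity.
  destruct N as [|N'].
  -
    assert (Hu0 : u O = Rj O).
    { unfold u, Rj. apply h_term_eval. simpl. unfold bb, s. simpl. field.
      unfold bb. simpl. rewrite Rabs_pos_eq; lra. }
    assert (Hv : forall j, v j = Rj (S j)).
    { intros j. unfold v, Rj. apply h_term_eval. rewrite IZR_neg. unfold s, bb. rewrite Nat.add_0_l, S_INR. field.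
      unfold bb. rewrite Nat.add_0_l, S_INR. pose proof (pos_INR j). rewrite Rabs_pos_eq; simpl; lra. }
    assert (Hsu : is_series u (lL + Rj O)).
    { apply (is_series_decr_1 u). rewrite Hu0. change (plus (lL + Rj 0%nat) (opp (Rj 0%nat))) with (lL + Rj O + - Rj O).
      replace (lL + Rj O + - Rj O) with lL by ring. apply (ser_ext Lj). intros j. rewrite <- HuL. auto. auto. }
    assert (Hsv : is_series v (lR - Rj O)).
    { apply (ser_ext (fun j => Rj (S j))). intros; auto. apply (is_series_incr_1 Rj).
      change (plus (lR - Rj 0%nat) (Rj 0%nat)) with (lR - Rj O + Rj O). replace (lR - Rj O + Rj O) with lR by ring. auto. }
    rewrite Hfr. rewrite (is_series_unique _ _ Hsu), (is_series_unique _ _ Hsv).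
    replace (lL + Rj O + (lR - Rj O)) with (lR + lL) by ring. auto.
  -
    set (N := S N') in *.
    assert (Hsu : is_series u lL).
    { apply (ser_shift0 (N+1)). intros k Hk. unfold u. apply h_term_zero. rewrite IZR_nat. unfold s in Hs'.
      destruct k. rewrite INR_0. rewrite Rabs_pos_eq by lra. unfold N. rewrite S_INR. pose proof (pos_INR N'). lra.
      assert (INR (S k) <= INR N) by (apply le_INR; lia). rewrite S_INR in *. pose proof (pos_INR k).
      apply rabs_le_2. lra.
      apply (ser_ext Lj); [intros; rewrite HuL; auto | auto]. }
    assert (Hsv : is_series v lR).
    { apply (ser_shift0 N'). intros k Hk. unfold v. apply h_term_zero. rewrite IZR_neg. unfold s in Hs'.
      assert (INR k + 2 <= INR N) by (unfold N; rewrite S_INR; assert (INR (S k) <= INR N') by (apply le_INR; lia); rewrite S_INR in *; lra).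
      pose proof (pos_INR k). rewrite Rabs_pos_eq; lra.
      apply (ser_ext Rj); auto. intros j. unfold v, Rj. symmetry. apply h_term_eval. rewrite IZR_neg. unfold s, bb, N.
      rewrite !plus_INR, S_INR. field. unfold bb. rewrite Rabs_pos_eq. unfold N. rewrite plus_INR, S_INR.
      pose proof (pos_INR j). lra. pose proof (pos_INR (N+j)). lra. }
    rewrite Hfr. rewrite (is_series_unique _ _ Hsu), (is_series_unique _ _ Hsv).
    replace (lL + lR) with (lR + lL) by ring. auto.
Qed.


Definition gg N p := 4*(p+1)*lambda_inc (p+2) (INR N) - PI^2*lambda_inc p (INR N).
Definition PP p := Rpower PI (-p) * Rpower 2 p.

Lemma PP_pos p : 0 < PP p.
Proof. unfold PP. apply Rmult_lt_0_compat; apply Rpower_pos. Qed.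

Lemma Ck_pos p : 0 < p -> 0 < Ck p.
Proof. intros. unfold Ck. assert (0 < p^2) by nra. assert (0 < p^3) by (apply pow_lt; lra). lra. Qed.

Lemma local_exp p N x : 1 < p -> Rabs (x - 1/2) <= /8 -> p * Rabs (x - 1/2) <= /4 ->
  Rabs (frak_h p N x - frak_h p N (1/2) - PP p * p * (x-1/2)^2 * gg N p)
   <= PP p * Ck p * Rabs (x-1/2)^3 * lambda_inc p (INR N).
Proof.
  intros Hp Hs Hps. set (s := x - 1/2) in *.
  pose proof (frak_series p N x Hp Hs) as H1. fold s in H1.
  assert (H0 : is_series (fun j => Tm p (bb N j) 0) (frak_h p N (1/2))).
  { apply (ser_ext (fun j => Tm p (bb N j) (1/2 - 1/2))). intros; f_equal; ring.
    apply frak_series; auto. replace (1/2-1/2) with 0 by ring. rewrite Rabs_R0; lra. }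
  destruct (lam_series N (p+2) ltac:(lra)) as [L2 _].
  destruct (lam_series N p Hp) as [L0 _].
  pose proof (ser_scal (PP p * p * s^2) _ _ (ser_minus _ _ _ _ (ser_scal (4*(p+1)) _ _ L2) (ser_scal (PI^2) _ _ L0))) as HQ.
  pose proof (ser_minus _ _ _ _ (ser_minus _ _ _ _ H1 H0) HQ) as HD.
  pose proof (ser_scal (PP p * Ck p * Rabs s^3) _ _ L0) as HB.
  replace (PP p * p * s^2 * gg N p) with (PP p * p * s ^ 2 * (4 * (p + 1) * lambda_inc (p + 2) (INR N) - PI ^ 2 * lambda_inc p (INR N))) by (unfold gg; ring).
  apply (ser_abs_le _ _ _ _ HD HB).
  intros j. simpl.
  pose proof (Tm_est p (N+j) s Hp Hs Hps) as HT. unfold bb. unfold PP.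
  match goal with |- Rabs ?A <= _ => match type of HT with Rabs ?B <= _ => replace A with B by ring end end.
  eapply Rle_trans; [exact HT| right; ring].
Qed.

Lemma locmin p N : 1 < p -> 0 < gg N p -> is_local_min (frak_h p N) (1/2).
Proof.
  intros Hp Hg.
  pose proof (lam_pos N p Hp) as Hl. pose proof (Ck_pos p ltac:(lra)) as Hc. pose proof (PP_pos p).
  set (d := Rmin (Rmin (/8) (/(4*p))) (p * gg N p / (Ck p * lambda_inc p (INR N)))).
  assert (Hd1 : d <= /8) by (unfold d; repeat (apply Rmin_glb_l || apply Rle_trans with (Rmin (/8) (/(4*p))); try apply Rmin_l); lra).
  exists d. split.
  { unfold d. repeat apply Rmin_pos; try lra. apply Rinv_0_lt_compat; lra.
    apply Rdiv_lt_0_compat; nra. }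
  intros x Hx. set (σ := Rabs (x - 1/2)) in *. assert (0 <= σ) by apply Rabs_pos.
  assert (Hσ1 : σ <= /8).
  { assert (d <= /8). { unfold d. eapply Rle_trans. apply Rmin_l. apply Rmin_l. } lra. }
  assert (Hσ2 : σ <= /(4*p)).
  { assert (d <= /(4*p)). { unfold d. eapply Rle_trans. apply Rmin_l. apply Rmin_r. } lra. }
  assert (Hσ3 : σ <= p * gg N p / (Ck p * lambda_inc p (INR N))).
  { assert (d <= p * gg N p / (Ck p * lambda_inc p (INR N))) by (unfold d; apply Rmin_r). lra. }
  assert (Hps : p * σ <= /4).
  { apply Rmult_le_compat_l with (r := p) in Hσ2. rewrite Rinv_mult in Hσ2. 
    replace (p * (/4 * /p)) with (/4) in Hσ2 by (field; lra). auto. lra. }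
  pose proof (local_exp p N x Hp Hσ1 Hps) as HE. fold σ in HE.
  apply rabs_2 in HE.
  assert (Hs2 : (x - 1/2)^2 = σ^2) by (unfold σ; rewrite <- pow2_abs; auto).
  rewrite Hs2 in HE.
  assert (Ck p * σ * lambda_inc p (INR N) <= p * gg N p).
  { apply Rmult_le_compat_r with (r := Ck p * lambda_inc p (INR N)) in Hσ3.
    replace (p * gg N p / (Ck p * lambda_inc p (INR N)) * (Ck p * lambda_inc p (INR N))) with (p * gg N p) in Hσ3 by (field; nra).
    nra. nra. }
  assert (0 <= PP p * σ^2) by nra.
  assert (PP p * Ck p * σ ^ 3 * lambda_inc p (INR N) = (PP p * σ^2) * (Ck p * σ * lambda_inc p (INR N))) by ring.
  assert (PP p * p * σ^2 * gg N p = (PP p * σ^2) * (p * gg N p)) by ring.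
  assert ((PP p * σ^2) * (Ck p * σ * lambda_inc p (INR N)) <= (PP p * σ^2) * (p * gg N p)) by (apply Rmult_le_compat_l; auto).
  lra.
Qed.

Lemma locmax p N : 1 < p -> gg N p < 0 -> is_local_max (frak_h p N) (1/2).
Proof.
  intros Hp Hg.
  pose proof (lam_pos N p Hp) as Hl. pose proof (Ck_pos p ltac:(lra)) as Hc. pose proof (PP_pos p).
  set (d := Rmin (Rmin (/8) (/(4*p))) (- p * gg N p / (Ck p * lambda_inc p (INR N)))).
  exists d. split.
  { unfold d. repeat apply Rmin_pos; try lra. apply Rinv_0_lt_compat; lra.
    apply Rdiv_lt_0_compat; nra. }
  intros x Hx. set (σ := Rabs (x - 1/2)) in *. assert (0 <= σ) by apply Rabs_pos.
  assert (Hσ1 : σ <= /8).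
  { assert (d <= /8). { unfold d. eapply Rle_trans. apply Rmin_l. apply Rmin_l. } lra. }
  assert (Hσ2 : σ <= /(4*p)).
  { assert (d <= /(4*p)). { unfold d. eapply Rle_trans. apply Rmin_l. apply Rmin_r. } lra. }
  assert (Hσ3 : σ <= - p * gg N p / (Ck p * lambda_inc p (INR N))).
  { assert (d <= - p * gg N p / (Ck p * lambda_inc p (INR N))) by (unfold d; apply Rmin_r). lra. }
  assert (Hps : p * σ <= /4).
  { apply Rmult_le_compat_l with (r := p) in Hσ2. rewrite Rinv_mult in Hσ2. 
    replace (p * (/4 * /p)) with (/4) in Hσ2 by (field; lra). auto. lra. }
  pose proof (local_exp p N x Hp Hσ1 Hps) as HE. fold σ in HE.
  apply rabs_2 in HE.
  assert (Hs2 : (x - 1/2)^2 = σ^2) by (unfold σ; rewrite <- pow2_abs; auto).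
  rewrite Hs2 in HE.
  assert (Ck p * σ * lambda_inc p (INR N) <= - p * gg N p).
  { apply Rmult_le_compat_r with (r := Ck p * lambda_inc p (INR N)) in Hσ3.
    replace (- p * gg N p / (Ck p * lambda_inc p (INR N)) * (Ck p * lambda_inc p (INR N))) with (- p * gg N p) in Hσ3 by (field; nra).
    nra. nra. }
  assert (0 <= PP p * σ^2) by nra.
  assert (PP p * Ck p * σ ^ 3 * lambda_inc p (INR N) = (PP p * σ^2) * (Ck p * σ * lambda_inc p (INR N))) by ring.
  assert (PP p * p * σ^2 * gg N p = - ((PP p * σ^2) * (- p * gg N p))) by ring.
  assert ((PP p * σ^2) * (Ck p * σ * lambda_inc p (INR N)) <= (PP p * σ^2) * (- p * gg N p)) by (apply Rmult_le_compat_l; auto).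
  lra.
Qed.


Lemma gg_series N p : 1 < p ->
  is_series (fun j => 4*(p+1)*Rpower (bb N j) (-(p+2)) - PI^2 * Rpower (bb N j) (-p)) (gg N p).
Proof.
  intros Hp. destruct (lam_series N (p+2) ltac:(lra)) as [L2 _]. destruct (lam_series N p Hp) as [L0 _].
  apply (ser_minus _ _ _ _ (ser_scal (4*(p+1)) _ _ L2) (ser_scal (PI^2) _ _ L0)).
Qed.

Lemma Rpower_anti b c r : 0 < b -> b <= c -> 0 <= r -> Rpower c (-r) <= Rpower b (-r).
Proof.
  intros. rewrite !Rpower_Ropp. apply Rinv_le_contravar. apply Rpower_pos.
  apply Rle_Rpower_l; lra.
Qed.

Lemma mono N p q : 1 < p -> p < q -> 0 <= gg N p -> 0 < gg N q.
Proof.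
  intros Hp Hpq Hg.
  pose proof PI_RGT_0 as Hpi.
  set (A := sqrt (4*(q+1)) / PI).
  assert (HA : 0 < A) by (unfold A; apply Rdiv_lt_0_compat; auto; apply sqrt_lt_R0; lra).
  assert (HA2 : A^2 = 4*(q+1)/PI^2).
  { unfold A. unfold Rdiv. rewrite Rpow_mult_distr. rewrite pow2_sqrt by lra. rewrite pow_inv. auto. }
  set (r := q - p). assert (Hr : 0 < r) by (unfold r; lra).
  set (w := Rpower A (-r)). assert (Hw : 0 < w) by apply Rpower_pos.
  set (D := fun j => 4*(q+1)*Rpower (bb N j) (-(p+2)) - PI^2 * Rpower (bb N j) (-p)).
  assert (HD : is_series D (gg N p + 4*(q-p)*lambda_inc (p+2) (INR N))).
  { destruct (lam_series N (p+2) ltac:(lra)) as [L2 _].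
    apply (ser_ext (fun j => (4*(p+1)*Rpower (bb N j) (-(p+2)) - PI^2 * Rpower (bb N j) (-p)) + 4*(q-p) * Rpower (bb N j) (-(p+2)))).
    intros j; unfold D; ring.
    apply ser_plus. apply gg_series; auto. apply ser_scal; auto. }
  pose proof (ser_scal w _ _ HD) as HwD.
  assert (Hle : w * (gg N p + 4*(q-p)*lambda_inc (p+2) (INR N)) <= gg N q).
  { apply (ser_le _ _ _ _ HwD (gg_series N q ltac:(lra))).
    intros j. cbv beta. set (b := bb N j). assert (Hb : 1 <= b) by apply bb_ge.
    assert (E1 : Rpower b (-(q+2)) = Rpower b (-r) * Rpower b (-(p+2))).
    { rewrite <- Rpower_plus. f_equal. unfold r; ring. }
    assert (E2 : Rpower b (-q) = Rpower b (-r) * Rpower b (-p)).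
    { rewrite <- Rpower_plus. f_equal. unfold r; ring. }
    rewrite E1, E2.
    assert (HDj : D j = Rpower b (-p) * (4*(q+1)/b^2 - PI^2)).
    { unfold D. fold b. rewrite Rpower_p2 by lra. field. lra. }
    replace (4 * (q + 1) * (Rpower b (- r) * Rpower b (- (p + 2))) - PI ^ 2 * (Rpower b (- r) * Rpower b (- p)))
      with (Rpower b (-r) * D j) by (unfold D; fold b; ring).
    assert ((Rpower b (-r) - w) * D j >= 0).
    { rewrite HDj. pose proof (Rpower_pos b (-p)).
      destruct (Rle_lt_dec b A).
      - assert (w <= Rpower b (-r)) by (apply Rpower_anti; lra).
        assert (b^2 <= A^2) by nra. rewrite HA2 in H1.
        assert (0 <= 4*(q+1)/b^2 - PI^2).
        { apply Rmult_le_reg_r with (b^2). nra. unfold Rdiv. rewrite Rmult_minus_distr_r.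
          rewrite Rmult_assoc, Rinv_l by nra. apply Rmult_le_compat_r with (r := PI^2) in H1.
          unfold Rdiv in H1. rewrite Rmult_assoc, Rinv_l in H1 by nra. nra. nra. }
        apply Rle_ge. apply Rmult_le_pos; nra.
      - assert (Rpower b (-r) <= w) by (apply Rpower_anti; lra).
        assert (A^2 < b^2) by nra. rewrite HA2 in H1.
        assert (4*(q+1)/b^2 - PI^2 < 0).
        { apply Rmult_lt_reg_r with (b^2). nra. unfold Rdiv. rewrite Rmult_minus_distr_r.
          rewrite Rmult_assoc, Rinv_l by nra. apply Rmult_lt_compat_r with (r := PI^2) in H1.
          unfold Rdiv in H1. rewrite Rmult_assoc, Rinv_l in H1 by nra. nra. nra. }
        apply Rle_ge. 
        replace ((Rpower b (- r) - w) * (Rpower b (- p) * (4 * (q + 1) / b ^ 2 - PI ^ 2)))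
          with ((w - Rpower b (- r)) * (Rpower b (- p) * (-(4 * (q + 1) / b ^ 2 - PI ^ 2)))) by ring.
        apply Rmult_le_pos; nra. }
    nra. }
  assert (0 < lambda_inc (p+2) (INR N)) by (apply lam_pos; lra).
  assert (0 < w * (gg N p + 4*(q-p)*lambda_inc (p+2) (INR N))).
  { apply Rmult_lt_0_compat; auto. nra. }
  lra.
Qed.

Lemma term_lip b s1 s s' : 1 <= b -> 1 < s1 -> s1 <= s <= s' ->
  0 <= Rpower b (-s) - Rpower b (-s') <= (s'-s) * (Rpower b (-(s1 - (s1-1)/2)) / ((s1-1)/2)).
Proof.
  intros Hb Hs1 Hs. set (e := (s1-1)/2). assert (He : 0 < e) by (unfold e; lra).
  assert (HL : 0 <= ln b) by (rewrite <- ln_1; apply ln_le; lra).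
  set (L := ln b) in *. unfold Rpower. fold L. split.
  - assert (exp (-s' * L) <= exp (-s * L)).
    { destruct (Rle_lt_or_eq_dec (-s'*L) (-s*L)). nra. left; apply exp_increasing; auto. rewrite e0; lra. }
    lra.
  - replace (exp (-s' * L)) with (exp (-s*L) * exp (-(s'-s)*L)) by (rewrite <- exp_plus; f_equal; ring).
    pose proof (exp_ineq1_le (-(s'-s)*L)).
    pose proof (exp_ineq1_le (e*L)).
    assert (Hx : 0 < exp (-s*L)) by apply exp_pos.
    assert (exp (-s*L) - exp (-s*L) * exp (-(s'-s)*L) <= exp (-s*L) * ((s'-s)*L)) by nra.
    assert (L <= exp (e*L) / e).
    { apply Rmult_le_reg_r with e; auto. unfold Rdiv. rewrite Rmult_assoc, Rinv_l by lra. nra. }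
    assert (exp (-s*L) * exp (e*L) <= exp (-(s1 - e)*L)).
    { rewrite <- exp_plus. destruct (Rle_lt_or_eq_dec (-s*L + e*L) (-(s1-e)*L)). nra.
      left; apply exp_increasing; auto. rewrite e0; lra. }
    assert (0 <= s' - s) by lra.
    apply Rle_trans with (exp (-s*L) * ((s'-s)*L)). auto.
    apply Rle_trans with (exp (-s*L) * ((s'-s)*(exp (e*L)/e))).
    apply Rmult_le_compat_l. lra. apply Rmult_le_compat_l; lra.
    replace (exp (-s*L) * ((s'-s)*(exp (e*L)/e))) with ((s'-s) * (exp (-s*L) * exp (e*L)) / e) by (field; lra).
    unfold Rdiv. rewrite Rmult_assoc. apply Rmult_le_compat_l. lra.
    apply Rmult_le_compat_r. left; apply Rinv_0_lt_compat; lra. auto.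
Qed.

Definition Klip N s1 := lambda_inc (s1 - (s1-1)/2) (INR N) / ((s1-1)/2).

Lemma lam_lip N s1 s s' : 1 < s1 -> s1 <= s <= s' ->
  0 <= lambda_inc s (INR N) - lambda_inc s' (INR N) <= (s'-s) * Klip N s1.
Proof.
  intros Hs1 Hs.
  destruct (lam_series N s ltac:(lra)) as [L1 _]. destruct (lam_series N s' ltac:(lra)) as [L2 _].
  destruct (lam_series N (s1 - (s1-1)/2) ltac:(lra)) as [L3 _].
  pose proof (ser_minus _ _ _ _ L1 L2) as HD.
  pose proof (ser_scal ((s'-s)/((s1-1)/2)) _ _ L3) as HB.
  split.
  - assert (H0 : is_series (fun _ : nat => 0) 0).
    { pose proof (ser_scal 0 _ _ L1). rewrite Rmult_0_l in H. apply (ser_ext _ _ _ (fun n => Rmult_0_l _) H). }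
    apply (ser_le _ _ _ _ H0 HD).
    intros n. apply (term_lip (bb N n) s1 s s'); auto. apply bb_ge.
  - unfold Klip. replace ((s' - s) * (lambda_inc (s1 - (s1 - 1) / 2) (INR N) / ((s1 - 1) / 2)))
     with ((s'-s)/((s1-1)/2) * lambda_inc (s1 - (s1 - 1) / 2) (INR N)) by (field; lra).
    apply (ser_le _ _ _ _ HD HB). intros n.
    pose proof (term_lip (bb N n) s1 s s' (bb_ge N n) Hs1 Hs). cbv beta.
    replace ((s' - s) / ((s1 - 1) / 2) * Rpower (bb N n) (- (s1 - (s1 - 1) / 2)))
      with ((s' - s) * (Rpower (bb N n) (- (s1 - (s1 - 1) / 2)) / ((s1 - 1) / 2))) by (field; lra). lra.
Qed.

Lemma lam_lip_abs N s1 a b : 1 < s1 -> s1 <= a -> s1 <= b ->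
  Rabs (lambda_inc a (INR N) - lambda_inc b (INR N)) <= Klip N s1 * Rabs (a - b).
Proof.
  intros Hs1 Ha Hb. destruct (Rle_dec a b).
  - destruct (lam_lip N s1 a b Hs1 ltac:(lra)). rewrite Rabs_pos_eq by lra.
    rewrite Rabs_left1 by lra. lra.
  - destruct (lam_lip N s1 b a Hs1 ltac:(lra)). rewrite Rabs_left1 by lra.
    rewrite Rabs_pos_eq by lra. lra.
Qed.

Lemma Klip_nn N s1 : 1 < s1 -> 0 <= Klip N s1.
Proof. intros. unfold Klip. apply Rdiv_le_0_compat. left; apply lam_pos; lra. lra. Qed.

Lemma gg_cont N p0 : 1 < p0 -> exists K, 0 <= K /\
  forall p, (1+p0)/2 <= p <= p0 + 1 -> Rabs (gg N p - gg N p0) <= K * Rabs (p - p0).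
Proof.
  intros Hp0. set (s1 := (1+p0)/2). assert (Hs1 : 1 < s1) by (unfold s1; lra).
  set (K1 := Klip N s1). assert (HK1 : 0 <= K1) by (apply Klip_nn; auto).
  set (l1 := lambda_inc s1 (INR N)). assert (Hl1 : 0 < l1) by (apply lam_pos; auto).
  exists (4*l1 + 4*(p0+1)*K1 + PI^2*K1). split.
  { pose proof PI_RGT_0. assert (0 <= PI^2) by nra. assert (0 <= (p0+1)*K1) by nra. nra. }
  intros p Hp.
  assert (Ha : Rabs (lambda_inc (p+2) (INR N) - lambda_inc (p0+2) (INR N)) <= K1 * Rabs (p - p0)).
  { replace (p - p0) with ((p+2) - (p0+2)) by ring. apply lam_lip_abs; unfold s1 in *; lra. }
  assert (Hb : Rabs (lambda_inc p (INR N) - lambda_inc p0 (INR N)) <= K1 * Rabs (p - p0)).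
  { apply lam_lip_abs; unfold s1 in *; lra. }
  assert (Hc : 0 <= lambda_inc (p+2) (INR N) <= l1).
  { split. left; apply lam_pos; lra. destruct (lam_lip N s1 s1 (p+2) Hs1 ltac:(unfold s1 in *; lra)). unfold l1. lra. }
  unfold gg.
  replace (4 * (p + 1) * lambda_inc (p + 2) (INR N) - PI ^ 2 * lambda_inc p (INR N) -
    (4 * (p0 + 1) * lambda_inc (p0 + 2) (INR N) - PI ^ 2 * lambda_inc p0 (INR N)))
   with (4*(p - p0)*lambda_inc (p+2) (INR N) + 4*(p0+1)*(lambda_inc (p+2) (INR N) - lambda_inc (p0+2) (INR N))
         - PI^2*(lambda_inc p (INR N) - lambda_inc p0 (INR N))) by ring.
  eapply Rle_trans. apply Rabs_triang. rewrite Rabs_Ropp.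
  eapply Rle_trans. apply Rplus_le_compat_r. apply Rabs_triang.
  rewrite !Rabs_mult. rewrite (Rabs_pos_eq 4), (Rabs_pos_eq (p0+1)), (Rabs_pos_eq (lambda_inc (p+2) (INR N))), (Rabs_pos_eq (PI^2)) by (try lra; nra).
  pose proof PI_RGT_0. assert (0 <= PI^2) by nra.
  assert (0 <= Rabs (p - p0)) by apply Rabs_pos.
  assert (4 * Rabs (p - p0) * lambda_inc (p + 2) (INR N) <= 4*l1*Rabs (p-p0)) by nra.
  assert (4 * (p0 + 1) * Rabs (lambda_inc (p + 2) (INR N) - lambda_inc (p0 + 2) (INR N)) <= 4*(p0+1)*(K1 * Rabs (p-p0))).
  { apply Rmult_le_compat_l; lra. }
  assert (PI^2 * Rabs (lambda_inc p (INR N) - lambda_inc p0 (INR N)) <= PI^2 * (K1*Rabs (p-p0))).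
  { apply Rmult_le_compat_l; lra. }
  nra.
Qed.

Lemma gg_neg_small N p : 1 < p -> 4*(p+1) < PI^2 * (2*INR N+1)^2 -> gg N p < 0.
Proof.
  intros Hp Hl. set (b0 := 2*INR N+1) in *. assert (Hb0 : 1 <= b0) by (unfold b0; pose proof (pos_INR N); lra).
  destruct (lam_series N (p+2) ltac:(lra)) as [L2 _]. destruct (lam_series N p Hp) as [L0 _].
  assert (H : lambda_inc (p+2) (INR N) <= / b0^2 * lambda_inc p (INR N)).
  { apply (ser_le _ _ _ _ L2 (ser_scal _ _ _ L0)). intros j.
    rewrite Rpower_p2 by (pose proof (bb_ge N j); lra).
    assert (b0 <= bb N j). { unfold b0, bb. rewrite plus_INR. pose proof (pos_INR j). lra. }
    pose proof (Rpower_pos (bb N j) (-p)).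
    unfold Rdiv. rewrite Rmult_comm. apply Rmult_le_compat_r. lra.
    apply Rinv_le_contravar. nra. apply pow_incr. lra. }
  pose proof (lam_pos N p Hp). unfold gg.
  assert (4*(p+1)*lambda_inc (p+2) (INR N) <= 4*(p+1)*(/b0^2 * lambda_inc p (INR N))) by (apply Rmult_le_compat_l; lra).
  assert (4*(p+1)*/b0^2 < PI^2).
  { apply Rmult_lt_reg_r with (b0^2). nra. rewrite Rmult_assoc, Rinv_l by nra. lra. }
  nra.
Qed.

Lemma gg_pos_big N U : 1 < U -> PI^2*(2*INR N+1)^2*(2*(U-1)+(2*INR N+1)) < 8*(U^2-1) -> 0 < gg N U.
Proof.
  intros HU Hin. set (b0 := 2*INR N+1) in *. assert (Hb0 : 1 <= b0) by (unfold b0; pose proof (pos_INR N); lra).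
  pose proof (lam_ge_first N (U+2) ltac:(lra)) as H1.
  destruct (lam_series N U HU) as [_ H2].
  rewrite bb_0 in H1, H2. fold b0 in H1, H2.
  rewrite Rpower_p2 in H1 by lra.
  replace (1 - U) with (1 + -U) in H2 by ring. rewrite Rpower_plus, Rpower_1 in H2 by lra.
  set (R0 := Rpower b0 (-U)) in *. assert (HR : 0 < R0) by apply Rpower_pos.
  unfold gg. pose proof PI_RGT_0. assert (0 < PI^2) by nra.
  assert (4*(U+1)*(R0/b0^2) <= 4*(U+1)*lambda_inc (U+2) (INR N)) by (apply Rmult_le_compat_l; lra).
  assert (PI^2*lambda_inc U (INR N) <= PI^2*(R0 + b0*R0/(2*(U-1)))) by (apply Rmult_le_compat_l; lra).
  assert (PI^2*(R0 + b0*R0/(2*(U-1))) < 4*(U+1)*(R0/b0^2)).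
  { replace (PI^2*(R0 + b0*R0/(2*(U-1)))) with (R0 * (PI^2*b0^2*(2*(U-1)+b0)) / (2*(U-1)*b0^2)) by (field; nra).
    replace (4*(U+1)*(R0/b0^2)) with (R0 * (8*(U^2-1)) / (2*(U-1)*b0^2)) by (field; nra).
    unfold Rdiv. apply Rmult_lt_compat_r. apply Rinv_0_lt_compat. apply Rmult_lt_0_compat; [lra|nra].
    apply Rmult_lt_compat_l; auto. }
  lra.
Qed.

Lemma U_ineq (M : R) : 1 <= M ->
  let c := PI^2 in
  let U := / 4 * sqrt (72 * c * M ^ 2 * (2 * c * M ^ 2 - 2 - c) + 4 + 36 * c + 9 * PI ^ 4)
             + 3 * c * M ^ 2 - 3 / 4 * (2 + c) in
  1 < U /\ c*(2*M-1)^2*(2*(U-1)+(2*M-1)) < 8*(U^2-1).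
Proof.
  intros HM c U. pose proof PI2_3_2. pose proof PI_4.
  assert (Hc : 9 < c <= 16) by (unfold c; split; nra).
  set (Y := 12*c*M^2 - 3*(2+c)).
  assert (HX : 72 * c * M ^ 2 * (2 * c * M ^ 2 - 2 - c) + 4 + 36 * c + 9 * PI ^ 4 = Y^2 - 32).
  { unfold Y, c. ring. }
  assert (HM2 : 1 <= M^2) by nra.
  assert (HY : 75 <= Y) by (unfold Y; nra).
  assert (Hs : Y - 1 <= sqrt (Y^2 - 32)).
  { rewrite <- (sqrt_pow2 (Y-1)) by lra. apply sqrt_le_1_alt. nra. }
  assert (HU : 6*c*M^2 - 3/2*(2+c) - /4 <= U).
  { unfold U. rewrite HX. assert (Y = 12*c*M^2 - 3*(2+c)) by reflexivity. lra. }
  assert (HU2 : 4*c*M^2 <= U) by nra.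
  assert (H36 : 36 <= U) by nra.
  assert (Hb : c*(2*M-1)^2 <= U) by nra.
  split. lra.
  assert (36*M <= U) by nra.
  assert (c*(2*M-1)^2*(2*(U-1)+(2*M-1)) <= U*(2*U + 2*M)).
  { assert (0 <= c*(2*M-1)^2) by nra. apply Rmult_le_compat; nra. }
  nra.
Qed.

Lemma LB_ineq (A : R) : 4 <= A ->
  / 8 * (A - 12 + sqrt ((A - 12) ^ 2 - 128)) <= A/4 - 1.
Proof.
  intros HA.
  assert (sqrt ((A - 12) ^ 2 - 128) <= Rabs (A - 12)).
  { rewrite <- sqrt_pow2 with (Rabs (A-12)) by apply Rabs_pos. rewrite pow2_abs.
    destruct (Rle_dec 0 ((A - 12) ^ 2 - 128)).
    apply sqrt_le_1_alt. lra.
    rewrite sqrt_neg_0 by lra. apply sqrt_pos. }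
  unfold Rabs in H. destruct Rcase_abs in H; lra.
Qed.


Theorem theorem3 (N : nat) :
  exists pstar : R,
    1 < pstar /\
    (forall p : R, 1 < p -> pstar < p -> is_local_min (frak_h p N) (1 / 2)) /\
    (forall p : R, 1 < p -> p < pstar -> is_local_max (frak_h p N) (1 / 2)) /\
    4 * (pstar + 1) * lambda_inc (pstar + 2) (INR N)
      - PI ^ 2 * lambda_inc pstar (INR N) = 0 /\
    / 8 * (PI ^ 2 * (2 * INR N + 1) ^ 2 - 12
           + sqrt ((PI ^ 2 * (2 * INR N + 1) ^ 2 - 12) ^ 2 - 128)) <= pstar /\
    pstar <= / 4 * sqrt (72 * PI ^ 2 * (INR N + 1) ^ 2
                           * (2 * PI ^ 2 * (INR N + 1) ^ 2 - 2 - PI ^ 2)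
                         + 4 + 36 * PI ^ 2 + 9 * PI ^ 4)
             + 3 * PI ^ 2 * (INR N + 1) ^ 2 - 3 / 4 * (2 + PI ^ 2).
Proof.
  pose proof (pos_INR N) as HN. pose proof PI2_3_2 as Hpi3. pose proof PI_4 as Hpi4.
  assert (HM : 1 <= INR N + 1) by lra.
  pose proof (U_ineq (INR N + 1) HM) as HUi. cbv zeta in HUi.
  set (U := / 4 * sqrt (72 * PI ^ 2 * (INR N + 1) ^ 2 * (2 * PI ^ 2 * (INR N + 1) ^ 2 - 2 - PI ^ 2)
                         + 4 + 36 * PI ^ 2 + 9 * PI ^ 4) + 3 * PI ^ 2 * (INR N + 1) ^ 2 - 3 / 4 * (2 + PI ^ 2)) in *.
  destruct HUi as [HU1 HU2].
  replace (2 * (INR N + 1) - 1) with (2 * INR N + 1) in HU2 by ring.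
  pose proof (gg_pos_big N U HU1 HU2) as HgU.
  set (S := fun p => 1 < p /\ gg N p < 0).
  assert (HSb : forall p, S p -> p <= U).
  { intros p [Hp Hg]. destruct (Rle_dec p U); auto.
    pose proof (mono N U p HU1 ltac:(lra) ltac:(lra)). lra. }
  assert (Hb0 : 1 <= 2*INR N+1) by lra.
  assert (HA9 : 9 < PI^2 * (2*INR N+1)^2).
  { assert (1 <= (2*INR N+1)^2) by nra. nra. }
  assert (HS0 : S (5/4)).
  { split. lra. apply gg_neg_small; lra. }
  destruct (completeness S (ex_intro _ U HSb) (ex_intro _ _ HS0)) as [m [Hub Hlub]].
  assert (Hm1 : 5/4 <= m) by (apply Hub; auto).
  assert (Hb : forall p, 1 < p -> p < m -> gg N p < 0).
  { intros p Hp Hpm.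
    assert (exists q, S q /\ p < q).
    { apply NNPP. intros Hn. assert (m <= p).
      { apply Hlub. intros q Hq. destruct (Rle_dec q p); auto. exfalso. apply Hn. exists q. split; auto. lra. }
      lra. }
    destruct H as [q [[Hq1 Hq2] Hpq]].
    destruct (Rlt_dec (gg N p) 0); auto.
    pose proof (mono N p q Hp Hpq ltac:(lra)). lra. }
  assert (Hc : forall p, m < p -> 0 < gg N p).
  { intros p Hmp. set (q := (m+p)/2).
    assert (~ S q). { intros Hq. pose proof (Hub q Hq). unfold q in *. lra. }
    assert (0 <= gg N q). { destruct (Rle_dec 0 (gg N q)); auto. exfalso. apply H. split. unfold q; lra. lra. }
    apply (mono N q p); unfold q in *; lra. }
  assert (Hd : gg N m = 0).
  { destruct (gg_cont N m ltac:(lra)) as [K [HK HKc]].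
    destruct (Rtotal_order (gg N m) 0) as [Hlt|[Heq|Hgt]]; auto.
    - exfalso. set (d := Rmin (/2) (- gg N m / (2*(K+1)))).
      assert (Hd0 : 0 < d). { unfold d. apply Rmin_pos. lra. apply Rdiv_lt_0_compat; lra. }
      assert (Hd1 : d <= /2) by apply Rmin_l.
      assert (Hd2 : d <= - gg N m / (2*(K+1))) by apply Rmin_r.
      pose proof (HKc (m + d) ltac:(lra)). replace (m + d - m) with d in H by ring.
      rewrite (Rabs_pos_eq d) in H by lra.
      pose proof (Hc (m+d) ltac:(lra)).
      assert (K * d <= - gg N m / 2).
      { apply Rle_trans with ((K+1)*d). assert ((K+1)*d = K*d + d) by ring. lra.
        apply Rmult_le_compat_l with (r := K+1) in Hd2. replace ((K+1) * (- gg N m / (2*(K+1)))) with (- gg N m / 2) in Hd2 by (field; lra). auto. lra. }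
      apply rabs_2 in H. lra.
    - exfalso. set (d := Rmin ((m-1)/2) (gg N m / (2*(K+1)))).
      assert (Hd0 : 0 < d). { unfold d. apply Rmin_pos. lra. apply Rdiv_lt_0_compat; lra. }
      assert (Hd1 : d <= (m-1)/2) by apply Rmin_l.
      assert (Hd2 : d <= gg N m / (2*(K+1))) by apply Rmin_r.
      pose proof (HKc (m - d) ltac:(lra)). replace (m - d - m) with (-d) in H by ring.
      rewrite Rabs_Ropp, (Rabs_pos_eq d) in H by lra.
      pose proof (Hb (m-d) ltac:(lra) ltac:(lra)).
      assert (K * d <= gg N m / 2).
      { apply Rle_trans with ((K+1)*d). assert ((K+1)*d = K*d + d) by ring. lra.
        apply Rmult_le_compat_l with (r := K+1) in Hd2. replace ((K+1) * (gg N m / (2*(K+1)))) with (gg N m / 2) in Hd2 by (field; lra). auto. lra. }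
      apply rabs_2 in H. lra. }
  assert (He : PI^2 * (2*INR N+1)^2 / 4 - 1 <= m).
  { destruct (Rle_dec (PI^2 * (2*INR N+1)^2 / 4 - 1) m); auto. exfalso.
    set (p := (m + (PI^2 * (2*INR N+1)^2 / 4 - 1))/2).
    pose proof (Hc p ltac:(unfold p; lra)).
    pose proof (gg_neg_small N p ltac:(unfold p; lra) ltac:(unfold p; lra)). lra. }
  exists m. split; [lra|]. split.
  { intros p Hp Hmp. apply locmin; auto. }
  split.
  { intros p Hp Hpm. apply locmax; auto. }
  split.
  { exact Hd. }
  split.
  { eapply Rle_trans. apply LB_ineq. lra. lra. }
  { apply Hlub. intros p Hp. apply HSb; auto. }
Qed.
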